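(* Let $\Omega\subseteq\mathbb{H}$ be a domain such that $\Omega\cap\mathbb{R}\neq\emptyset$. Then its symmetric completion $\widetilde{\Omega}=\bigcup_{x+yJ\in\Omega}(x+y\mathbb{S})$ is an axially symmetric s-domain.
   Context: $\mathbb{H}$ denotes the quaternions, $\mathbb{S}=\{q\in\mathbb{H}: \mathrm{Re}(q)=0,\ |\mathrm{Im}(q)|=1\}$ the 2-sphere of imaginary units, $L_I=\mathbb{R}+\mathbb{R}I$ for $I\in\mathbb{S}$, and $x+y\mathbb{S}=\{x+yL: L\in\mathbb{S}\}$ for $x,y\in\mathbb{R}$. A domain is a connected open set. A domain $\Omega$ is an s-domain if $\Omega\cap\mathbb{R}\neq\emptyset$ and $\Omega\cap L_I$ is a domain in $L_I$ for every $I\in\mathbb{S}$. A set $\Omega$ is axially symmetric if for every $x+yI\in\Omega$ ($x,y\in\mathbb{R}$, $I\in\mathbb{S}$) the sphere $x+y\mathbb{S}$ is contained in $\Omega$. *)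

(* Defs.v *)
From HB Require Import structures.
From mathcomp Require Import all_boot all_order all_algebra.
From mathcomp Require Import all_classical all_reals all_analysis.
Set Implicit Arguments. Unset Strict Implicit. Unset Printing Implicit Defensive.
Import Order.TTheory GRing.Theory Num.Theory.
Import numFieldNormedType.Exports.
Local Open Scope classical_set_scope.
Local Open Scope ring_scope.

(* Quaternions q = a + b i + c j + d k represented as the tuple (a,b,c,d)
   in R*R*R*R, with the (Euclidean = product) topology of R^4. *)
Notation quat R := (R * R * R * R)%type.

Section Quat.
Variable R : realType.

Definition qmk (a b c d : R) : quat R := (a, b, c, d).
Definition qre (q : quat R) : R := q.1.1.1.
Definition qi (q : quat R) : R := q.1.1.2.
Definition qj (q : quat R) : R := q.1.2.
Definition qk (q : quat R) : R := q.2.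

Definition qadd (p q : quat R) : quat R :=
  qmk (qre p + qre q) (qi p + qi q) (qj p + qj q) (qk p + qk q).
Definition qscale (y : R) (q : quat R) : quat R :=
  qmk (y * qre q) (y * qi q) (y * qj q) (y * qk q).
Definition qreal (x : R) : quat R := qmk x 0 0 0.

Definition qxy (x y : R) (I : quat R) : quat R := qadd (qreal x) (qscale y I).

Definition Sph : set (quat R) :=
  [set q | qre q = 0 /\ qi q ^+ 2 + qj q ^+ 2 + qk q ^+ 2 = 1].

Definition realaxis : set (quat R) := [set q | exists x : R, q = qreal x].

Definition sliceL (I : quat R) : set (quat R) := [set q | exists x y : R, q = qxy x y I].

Definition qsphere (x y : R) : set (quat R) := [set q | exists L, Sph L /\ q = qxy x y L].

Definition domain (A : set (quat R)) : Prop := open A /\ connected A.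

Definition domain_in_slice (I : quat R) (A : set (quat R)) : Prop :=
  A `<=` sliceL I /\ (exists2 U, open U & A = U `&` sliceL I) /\ connected A.

Definition s_domain (A : set (quat R)) : Prop :=
  domain A /\ A `&` realaxis !=set0 /\
  forall I, Sph I -> domain_in_slice I (A `&` sliceL I).

Definition axially_symmetric (A : set (quat R)) : Prop :=
  forall (x y : R) (I : quat R), Sph I -> A (qxy x y I) -> qsphere x y `<=` A.

Definition sym_completion (A : set (quat R)) : set (quat R) :=
  [set q | exists (x y : R) (J : quat R), [/\ Sph J, A (qxy x y J) & qsphere x y q]].

End Quat.
Arguments realaxis {R}.

(* Main.v *)
Require Import Defs.
From HB Require Import structures.
From mathcomp Require Import all_boot all_order all_algebra.
From mathcomp Require Import all_classical all_reals all_analysis.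
Import Order.TTheory GRing.Theory Num.Theory.
Import numFieldNormedType.Exports.
Local Open Scope classical_set_scope.
Local Open Scope ring_scope.
From mathcomp Require Import lra.
Set Implicit Arguments. Unset Strict Implicit.
Section S.
Variable R : realType.
Implicit Types p q : quat R.

Definition rad (p : quat R) : R := Num.sqrt (qi p ^+ 2 + qj p ^+ 2 + qk p ^+ 2).
Definition G (s : R) (L p : quat R) : quat R := qxy (qre p) (s * rad p) L.

Lemma cfst (T U : topologicalType) : continuous (fun p : T * U => p.1).
Proof. by move=> p; apply: cvg_fst. Qed.
Lemma csnd (T U : topologicalType) : continuous (fun p : T * U => p.2).
Proof. by move=> p; apply: cvg_snd. Qed.

Lemma c_re : continuous (@qre R).
Proof.
move=> p; rewrite /qre.
apply: (continuous_comp (f := fun p : quat R => p.1.1)) ; last exact: cfst.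
apply: (continuous_comp (f := fun p : quat R => p.1)) ; last exact: cfst.
exact: cfst.
Qed.
Lemma c_i : continuous (@qi R).
Proof.
move=> p; rewrite /qi.
apply: (continuous_comp (f := fun p : quat R => p.1.1)) ; last exact: csnd.
apply: (continuous_comp (f := fun p : quat R => p.1)) ; last exact: cfst.
exact: cfst.
Qed.
Lemma c_j : continuous (@qj R).
Proof.
move=> p; rewrite /qj.
apply: (continuous_comp (f := fun p : quat R => p.1)) ; last exact: csnd.
exact: cfst.
Qed.
Lemma c_k : continuous (@qk R).
Proof. exact: csnd. Qed.

Lemma c_rad : continuous rad.
Proof.
move=> p; rewrite /rad.
apply: (continuous_comp (f := fun p => qi p ^+ 2 + qj p ^+ 2 + qk p ^+ 2)); last exact: sqrt_continuous.
have h : forall f : quat R -> R, continuous f -> {for p, continuous (fun x => f x ^+ 2)}.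
  move=> f cf; have -> : (fun x => f x ^+ 2) = f \* f by apply/funext=> x; rewrite expr2.
  by apply: cvgM; exact: cf.
apply: cvgD; [apply: cvgD|]; apply: h; [exact: c_i|exact: c_j|exact: c_k].
Qed.

Lemma cont4 (f1 f2 f3 f4 : quat R -> R) : continuous f1 -> continuous f2 ->
  continuous f3 -> continuous f4 -> continuous (fun x => (f1 x, f2 x, f3 x, f4 x) : quat R).
Proof.
move=> c1 c2 c3 c4 x; rewrite /continuous_at.
have H := cvg_pair (f := fun y => (f1 y, f2 y, f3 y)) (g := f4) (F := nbhs x) _ (c4 x).
apply: (H (nbhs (f1 x, f2 x, f3 x))); try exact: nbhs_filter.
have H2 := cvg_pair (f := fun y => (f1 y, f2 y)) (g := f3) (F := nbhs x) _ (c3 x).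
apply: (H2 (nbhs (f1 x, f2 x))); try exact: nbhs_filter.
have H3 := cvg_pair (f := f1) (g := f2) (F := nbhs x) (c1 x) (c2 x).
apply: H3; exact: nbhs_filter.
Qed.

Lemma cmul (f g : quat R -> R) : continuous f -> continuous g -> continuous (fun x => f x * g x).
Proof. by move=> cf cg x; apply: cvgM; [exact: cf|exact: cg]. Qed.
Lemma cadd (f g : quat R -> R) : continuous f -> continuous g -> continuous (fun x => f x + g x).
Proof. by move=> cf cg x; apply: cvgD; [exact: cf|exact: cg]. Qed.
Lemma ccst (c : R) : continuous (fun _ : quat R => c).
Proof. by move=> x; apply: cvg_cst. Qed.

Lemma c_G s L : continuous (G s L).
Proof.
have -> : G s L = fun p => (qre p + s * rad p * qre L, 0 + s * rad p * qi L,
   0 + s * rad p * qj L, 0 + s * rad p * qk L) by [].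
have cr : continuous (fun p => s * rad p) by apply: cmul; [exact: ccst|exact: c_rad].
apply: cont4; apply: cadd; try apply: cmul; try exact: ccst; try exact: cr; exact: c_re.
Qed.

Lemma qxyE (x y : R) (L : quat R) : qxy x y L = (x + y * qre L, y * qi L, y * qj L, y * qk L).
Proof. by rewrite /qxy /qadd /qmk /qreal /qscale /= !add0r. Qed.

Lemma qre_qxy (x y : R) (L : quat R) : Sph L -> qre (qxy x y L) = x.
Proof. by case=> h0 _; rewrite qxyE /qre /= -/(qre L) h0 mulr0 addr0. Qed.

Lemma rad_qxy (x y : R) (L : quat R) : Sph L -> rad (qxy x y L) = `|y|.
Proof.
case=> _ h1; rewrite /rad qxyE /qi /qj /qk /=.
rewrite !exprMn -!mulrDr.
move: h1; rewrite /qi /qj /qk => ->.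
by rewrite mulr1 sqrtr_sqr.
Qed.

Lemma rad_ge0 p : 0 <= rad p.
Proof. exact: sqrtr_ge0. Qed.

Lemma polar p : exists u, Sph u /\ p = qxy (qre p) (rad p) u.
Proof.
have [r0|rn0] := eqVneq (rad p) 0.
  exists (qmk 0 1 0 0); split.
    by rewrite /Sph /qmk /qre /qi /qj /qk /=; split => //; rewrite expr1n expr0n /=; lra.
  move/eqP: r0; rewrite /rad sqrtr_eq0 => hle.
  have s1 := sqr_ge0 (qi p); have s2 := sqr_ge0 (qj p); have s3 := sqr_ge0 (qk p).
  have hb : qi p ^+ 2 = 0 by apply/eqP; rewrite eq_le sqr_ge0 andbT; lra.
  have hc : qj p ^+ 2 = 0 by apply/eqP; rewrite eq_le sqr_ge0 andbT; lra.
  have hd : qk p ^+ 2 = 0 by apply/eqP; rewrite eq_le sqr_ge0 andbT; lra.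
  move: hb hc hd => /eqP; rewrite sqrf_eq0 => /eqP hb /eqP; rewrite sqrf_eq0 => /eqP hc /eqP; rewrite sqrf_eq0 => /eqP hd.
  rewrite qxyE; clear hle s1 s2 s3; case: p hb hc hd => [[[a b] c] d].
  rewrite /qre /qi /qj /qk /qmk /= => -> -> ->.
  by rewrite !expr2 !mul0r !addr0 sqrtr0 !mul0r addr0.
set r := rad p.
have rpos : 0 < r by rewrite lt0r rn0 rad_ge0.
have hr2 : r ^+ 2 = qi p ^+ 2 + qj p ^+ 2 + qk p ^+ 2.
  by rewrite /r /rad sqr_sqrtr // !addr_ge0 // sqr_ge0.
exists (qmk 0 (qi p / r) (qj p / r) (qk p / r)); split.
  rewrite /Sph /qmk /qre /qi /qj /qk /=; split => //.
  rewrite !expr_div_n -!mulrDl -/(qi p) -/(qj p) -/(qk p) -hr2 divff //.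
  by rewrite expf_neq0 // gt_eqF.
rewrite qxyE; case: p rn0 r rpos hr2 => [[[a b] c] d] rn0 r rpos hr2.
rewrite /qre /qi /qj /qk /qmk /=.
have rn : r != 0 by rewrite gt_eqF.
by rewrite mulr0 addr0 !(mulrC r) !divfK.
Qed.

Lemma symE (A : set (quat R)) q :
  sym_completion A q <-> exists p, A p /\ qre p = qre q /\ rad p = rad q.
Proof.
split.
  case=> x [y [J [SJ AJ [L [SL ->]]]]].
  by exists (qxy x y J); rewrite !qre_qxy // !rad_qxy.
case=> p [Ap [e1 e2]].
have [J [SJ pJ]] := polar p; have [L [SL qL]] := polar q.
exists (qre p), (rad p), J; split => //; first by rewrite -pJ.
by exists L; split => //; rewrite e1 e2.
Qed.

Lemma G_inv s L p : Sph L -> `|s| = 1 -> qre (G s L p) = qre p /\ rad (G s L p) = rad p.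
Proof.
move=> SL hs; rewrite /G qre_qxy // rad_qxy //; split => //.
by rewrite normrM hs mul1r ger0_norm // rad_ge0.
Qed.

Lemma G_real s L x : G s L (qreal x) = qreal x.
Proof.
rewrite /G qxyE /rad /qreal /qmk /qre /qi /qj /qk /=.
by rewrite !expr2 !mul0r !addr0 sqrtr0 !mulr0 !mul0r addr0.
Qed.
End S.

Theorem proposition3p4 (R : realType) (Omega : set (quat R)) :
  domain Omega -> Omega `&` @realaxis R !=set0 ->
  axially_symmetric (sym_completion Omega) /\ s_domain (sym_completion Omega).
Proof.
move=> [Oop Ocon] [q0 [Oq0 [x0 q0E]]].
set S := sym_completion Omega.
have Oxr : Omega (qreal x0) by rewrite -q0E.
have Sx0 : S (qreal x0) by apply/symE; exists (qreal x0).
have Sop : open S.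
  rewrite openE => q /symE [p [Op [e1 e2]]].
  have [u [Su pu]] := polar p.
  have hGq : G 1 u q = p by rewrite /G mul1r -e1 -e2 -pu.
  have Np : nbhs p Omega by move: Oop; rewrite openE => /(_ p Op).
  have Hn : nbhs q (G 1 u @^-1` Omega).
    by move: (c_G (s:=1) (L:=u) (x:=q)); rewrite /continuous_at hGq; apply.
  rewrite /interior /=; apply: (filterS (P:=G 1 u @^-1` Omega)) Hn => q' Oq'; apply/symE; exists (G 1 u q'); split => //.
  by have [a b] := G_inv (s:=1) q' Su (normr1 _).
have Scon : connected S.
  have -> : S = \bigcup_(L in Sph (R:=R)) (G 1 L @` Omega).
    apply/seteqP; split => q.
      move/symE=> [p [Op [e1 e2]]]; have [L [SL qL]] := polar q.
      by exists L => //; exists p => //; rewrite /G mul1r e1 e2 -qL.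
    case=> L SL [p Op <-]; apply/symE; exists p; split => //.
    by have [a b] := G_inv (s:=1) p SL (normr1 _).
  apply: bigcup_connected.
    by exists (qreal x0) => L SL /=; exists (qreal x0) => //; exact: G_real.
  move=> L SL; apply: connected_continuous_connected => //.
  exact/continuous_subspaceT/c_G.
split.
  move=> x y I SI /symE [p [Op [e1 e2]]] q' [L [SL ->]].
  apply/symE; exists p; split => //.
  by move: e1 e2; rewrite !qre_qxy // !rad_qxy.
split; first by split.
split; first by exists (qreal x0); split => //; exists x0.
move=> I SI; split; first by move=> q [].
split; first by exists S.
have -> : S `&` sliceL I = (G 1 I @` Omega) `|` (G (-1) I @` Omega).
  apply/seteqP; split => q.
    case=> /symE [p [Op [e1 e2]]] [x [y qE]].
    move: e1 e2; rewrite qE qre_qxy // rad_qxy // => e1 e2.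
    have [y0|y0] := leP 0 y.
      by left; exists p => //; rewrite /G mul1r e1 e2 ger0_norm.
    by right; exists p => //; rewrite /G e1 e2 ltr0_norm // mulN1r opprK.
  have hsl : forall s, `|s| = 1 -> forall p, Omega p -> (S `&` sliceL I) (G s I p).
    move=> s hs p Op; split; last by exists (qre p), (s * rad p).
    apply/symE; exists p; split => //.
    by have [a b] := G_inv (s:=s) p SI hs.
  case=> -[p Op <-]; apply: hsl => //; first exact: normr1.
  by rewrite normrN normr1.
apply: connectedU.
- by exists (qreal x0); split; exists (qreal x0) => //; exact: G_real.
- apply: connected_continuous_connected => //.
  exact/continuous_subspaceT/c_G.
- apply: connected_continuous_connected => //.
  exact/continuous_subspaceT/c_G.
Qed.
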